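(* For every fixed $k,K\in\mathbf{N}$, the set $\{\pi\in S:\ \mathrm{al}(\pi)<K\ \&\ s_k(\pi)<K\}$ is well partially ordered by $\prec$.
   Context: $S_n$ is the set of permutations of $[n]$, $S=\bigcup_n S_n$; $\pi\prec\rho$ means $\rho$ has a subsequence order-isomorphic to $\pi$; $\pi|A$ is the permutation order-isomorphic to the subsequence of $\pi$ at positions in $A$. A partial order is a well partial order if it has no infinite strictly descending chains and no infinite antichains. Alternating: $\sigma(\{1,3,5,\dots\})>\sigma(\{2,4,6,\dots\})$. $\mathrm{al}(\pi)$ is the maximum length of an alternating $\sigma$ with $\sigma\prec\pi$ or $\sigma\prec\pi^{-1}$. For $\sigma\in S_n,\tau\in S_m$, $\sigma\oplus\tau\in S_{n+m}$ equals $\sigma(i)$ at $i\le n$ and $n+\tau(i-n)$ at $i>n$; $\sigma\ominus\tau$ equals $m+\sigma(i)$ at $i\le n$ and $\tau(i-n)$ at $i>n$. Up-(down-)indecomposable means not of the form $\sigma\oplus\tau$ ($\sigma\ominus\tau$) with both nonempty; $h^+(\pi)$ ($h^-(\pi)$) is the maximum length of a block in the unique decomposition of $\pi$ as a $\oplus$-sum of up-indecomposables ($\ominus$-sum of down-indecomposables). $H_k^\pm=\{\pi\in S:h^\pm(\pi)<k\}$. For $k\ge2$ and $\pi\in S_n$, $s_k(\pi)$ is the number $r$ of intervals in the greedy partition $I_1<\dots<I_r$ of $[n]$ where $I_1$ is the longest initial interval with $\pi|I_1\in H_k^+\cup H_k^-$, $I_2$ the longest following interval with $\pi|I_2\in H_k^+\cup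 H_k^-$, etc.; $s_1(\pi)=\infty$ by convention. *)

(* Defs.v *)
(* Permutations of [n] are encoded 0-based as sequences of
   naturals: pi : seq nat with perm_eq pi (iota 0 n); value pi(i) (1-based,
   values in 1..n) corresponds to nth 0 pi (i-1) + 1. *)
From mathcomp Require Import all_boot.
Set Implicit Arguments. Unset Strict Implicit. Unset Printing Implicit Defensive.

Definition is_perm (s : seq nat) : Prop := perm_eq s (iota 0 (size s)).

Definition std (s : seq nat) : seq nat :=
  map (fun x => count (fun y => y < x) s) s.

Definition restrict (pi : seq nat) (A : bitseq) : seq nat := std (mask A pi).

Definition contains (pi rho : seq nat) : Prop :=
  exists A : bitseq, restrict rho A = pi.

Definition perm_inv (s : seq nat) : seq nat :=
  map (fun v => index v s) (iota 0 (size s)).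

(* alternating: sigma({1,3,5,...}) > sigma({2,4,6,...}); 1-based odd positions
   are 0-based even indices *)
Definition alternating (s : seq nat) : Prop :=
  forall i j, i < size s -> j < size s -> ~~ odd i -> odd j ->
    nth 0 s j < nth 0 s i.

(* al(pi) < K, where al(pi) is the maximum length of an alternating sigma
   with sigma ≺ pi or sigma ≺ pi^{-1} (the maximum exists: the empty
   permutation qualifies and lengths are bounded by |pi|). *)
Definition al_lt (pi : seq nat) (K : nat) : Prop :=
  forall sigma, is_perm sigma -> alternating sigma ->
    (contains sigma pi \/ contains sigma (perm_inv pi)) -> size sigma < K.

Definition oplus (s t : seq nat) : seq nat := s ++ map (addn (size s)) t.
Definition ominus (s t : seq nat) : seq nat := map (addn (size t)) s ++ t.

Definition up_indecomposable (pi : seq nat) : Prop :=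
  ~ exists s t, s <> [::] /\ t <> [::] /\ pi = oplus s t.
Definition down_indecomposable (pi : seq nat) : Prop :=
  ~ exists s t, s <> [::] /\ t <> [::] /\ pi = ominus s t.

(* The unique decomposition of a permutation pi as a ⊕-sum of
   up-indecomposables is obtained by cutting pi after every position i
   (1 <= i <= |pi|) such that the prefix of length i is a permutation of
   {0,...,i-1}; similarly for ⊖ with prefixes consisting of the i largest
   values.  The block lengths are the differences of consecutive cuts. *)
Definition plus_cuts (pi : seq nat) : seq nat :=
  [seq i <- iota 1 (size pi) | all (fun x => x < i) (take i pi)].
Definition minus_cuts (pi : seq nat) : seq nat :=
  [seq i <- iota 1 (size pi) | all (fun x => size pi - i <= x) (take i pi)].

Definition max_block (cuts : seq nat) : nat :=
  foldr maxn 0 (pairmap (fun a b => b - a) 0 cuts).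

Definition h_plus (pi : seq nat) : nat := max_block (plus_cuts pi).
Definition h_minus (pi : seq nat) : nat := max_block (minus_cuts pi).

Definition inH (k : nat) (pi : seq nat) : bool :=
  (h_plus pi < k) || (h_minus pi < k).

Definition longest (k : nat) (r : seq nat) : nat :=
  foldr maxn 0 [seq L <- iota 0 (size r).+1 | inH k (std (take L r))].

Fixpoint greedy (fuel k : nat) (r : seq nat) : nat :=
  match fuel with
  | 0 => 0
  | f.+1 => if r is [::] then 0 else (greedy f k (drop (longest k r) r)).+1
  end.

(* s_k(pi) for k >= 2 (for k >= 2 every step removes at least one entry,
   so fuel |pi| suffices) *)
Definition s_k (k : nat) (pi : seq nat) : nat := greedy (size pi) k pi.

(* s_k(pi) < K, with the convention s_1(pi) = infinity *)
Definition s_lt (k : nat) (pi : seq nat) (K : nat) : Prop :=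
  if k <= 1 then False else s_k k pi < K.

Definition strictly_below (pi rho : seq nat) : Prop := contains pi rho /\ pi <> rho.

Definition wpo (X : seq nat -> Prop) : Prop :=
  (~ exists f : nat -> seq nat,
       (forall n, X (f n)) /\ (forall n, strictly_below (f n.+1) (f n))) /\
  (~ exists f : nat -> seq nat,
       (forall n, X (f n)) /\
       (forall i j, i <> j -> ~ contains (f i) (f j))).

(* Main.v *)
Require Import Defs.
From mathcomp Require Import all_boot.
From mathcomp Require Import zify.
From Stdlib Require Import Classical ClassicalEpsilon.
Set Implicit Arguments. Unset Strict Implicit. Unset Printing Implicit Defensive.

Definition rank (s : seq nat) (x : nat) := count (fun y => y < x) s.

Lemma std_nth s i : i < size s -> nth 0 (std s) i = rank s (nth 0 s i).
Proof. by move=> hi; rewrite /std (nth_map 0). Qed.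

Lemma count_strict (T : eqType) (a b : pred T) s x :
  (forall z, a z -> b z) -> x \in s -> b x -> ~~ a x -> count a s < count b s.
Proof.
move=> ab; elim: s => [|y s IH] //= ; rewrite inE => /orP[/eqP <-|xs] bx ax.
- rewrite (negbTE ax) bx add0n add1n ltnS; exact: sub_count.
- have h1 := IH xs bx ax.
  have h2 : a y <= b y by case: (a y) (ab y) => // ->.
  by rewrite -addnS; apply: leq_add.
Qed.

Lemma rank_lt s x y : x \in s -> (rank s x < rank s y) = (x < y).
Proof.
move=> xs; rewrite /rank; case: (ltnP x y) => hxy.
- apply: (count_strict (x:=x)) => //= [z h|]; [exact: ltn_trans h hxy|by rewrite ltnn].
- rewrite ltnNge; apply/negbF; apply: sub_count => z h; exact: leq_trans h hxy.
Qed.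

Lemma rank_lt_size s x : x \in s -> rank s x < size s.
Proof.
move=> xs; rewrite /rank -(count_predC (fun y => y < x) s) -{1}[count _ s]addn0 ltn_add2l.
by rewrite -has_count; apply/hasP; exists x => //=; rewrite ltnn.
Qed.

Lemma std_perm_of_uniq s : uniq s -> is_perm (std s).
Proof.
move=> us; rewrite /is_perm size_map.
have ust : uniq (std s).
  rewrite map_inj_in_uniq // => x y xs ys e.
  apply/eqP; case: (ltngtP x y) => // h.
  - by move: h; rewrite -(rank_lt _ xs) /rank e ltnn.
  - by move: h; rewrite -(rank_lt _ ys) /rank e ltnn.
have sub : {subset std s <= iota 0 (size s)}.
  by move=> z /mapP[x xs ->]; rewrite mem_iota /= rank_lt_size.
apply: uniq_perm => //; first exact: iota_uniq.
have hs : size (iota 0 (size s)) <= size (std s) by rewrite size_iota size_map.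
have [_ h] := uniq_min_size ust sub hs.
by move=> z; rewrite h.
Qed.

Lemma count_lt_iota n x : x <= n -> count (fun y => y < x) (iota 0 n) = x.
Proof.
move=> hx; rewrite -(subnKC hx) iotaD count_cat add0n.
rewrite (eq_in_count (a2 := predT)); last by move=> y; rewrite mem_iota.
rewrite count_predT size_iota (eq_in_count (a2 := pred0)) ?count_pred0 ?addn0 //.
by move=> y; rewrite mem_iota /= => /andP[h _]; rewrite ltnNge h.
Qed.

Lemma std_perm s : is_perm s -> std s = s.
Proof.
move=> ps; rewrite /std -[in RHS](map_id s); apply/eq_in_map => x xs.
rewrite (permP ps) count_lt_iota //.
by move: xs; rewrite (perm_mem ps) mem_iota /= => /ltnW.
Qed.

Lemma perm_uniq_ s : is_perm s -> uniq s.
Proof. by move=> ps; rewrite (perm_uniq ps) iota_uniq. Qed.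

Lemma perm_lt s x : is_perm s -> x \in s -> x < size s.
Proof. by move=> ps; rewrite (perm_mem ps) mem_iota. Qed.

Definition Agree (A B : eqType) (R1 : rel A) (R2 : rel B) (z : seq (A * B)) :=
  {in z &, forall x y, R1 x.1 y.1 = R2 x.2 y.2}.

Lemma zip_memP (A B : eqType) (a0 : A) (b0 : B) s t x :
  size s = size t -> x \in zip s t -> exists2 i, i < size s & x = (nth a0 s i, nth b0 t i).
Proof.
move=> st /(nthP (a0, b0)) [i]; rewrite size_zip st minnn => hi <-.
by exists i; rewrite ?st // nth_zip.
Qed.

Lemma zip_mem_nth (A B : eqType) (a0 : A) (b0 : B) s t i :
  size s = size t -> i < size s -> (nth a0 s i, nth b0 t i) \in zip s t.
Proof.
move=> st hi; rewrite -nth_zip //; apply: mem_nth; by rewrite size_zip st minnn -st.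
Qed.

Lemma std_agree s t : size s = size t -> Agree ltn ltn (zip s t) -> std s = std t.
Proof.
move=> st ag; apply: (@eq_from_nth _ 0); first by rewrite !size_map.
move=> i; rewrite size_map => hi; rewrite !std_nth -?st //.
have cs : forall (P : pred nat) (u : seq nat), count P u = count (fun j => P (nth 0 u j)) (iota 0 (size u)).
  by move=> P u; rewrite -{1}(mkseq_nth 0 u) /mkseq count_map.
rewrite /rank (cs _ s) (cs _ t) -st.
apply: eq_in_count => j; rewrite mem_iota /= => hj.
exact: (ag _ _ (zip_mem_nth 0 0 st hj) (zip_mem_nth 0 0 st hi)).
Qed.

Lemma agree_trans (A B C : eqType) (a0 : A) (b0 : B) (c0 : C) (R1 : rel A) (R2 : rel B) (R3 : rel C) s t r :
  size s = size t -> size t = size r ->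
  Agree R1 R2 (zip s t) -> Agree R3 R2 (zip r t) -> Agree R1 R3 (zip s r).
Proof.
move=> st tr h1 h2 x y /(zip_memP a0 c0 (etrans st tr)) [i hi ->] /(zip_memP a0 c0 (etrans st tr)) [j hj ->] /=.
rewrite (h1 _ _ (zip_mem_nth a0 b0 st hi) (zip_mem_nth a0 b0 st hj)).
rewrite st tr in hi hj.
by rewrite (h2 _ _ (zip_mem_nth c0 b0 (esym tr) hi) (zip_mem_nth c0 b0 (esym tr) hj)).
Qed.

Lemma agree_sub (A B : eqType) (R1 : rel A) (R2 : rel B) (z z' : seq (A * B)) :
  {subset z' <= z} -> Agree R1 R2 z -> Agree R1 R2 z'.
Proof. by move=> sub h x y hx hy; apply: h; apply: sub. Qed.

Lemma mask_zip (A B : Type) m (s : seq A) (t : seq B) :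
  size s = size t -> mask m (zip s t) = zip (mask m s) (mask m t).
Proof.
elim: s t m => [|x s IH] [|y t] [|b m] //= [e]; case: b; by rewrite IH.
Qed.

Lemma agree_map (A B C : eqType) (R1 : rel A) (R2 : rel B) (R3 : rel C) (G : C -> B) (s : seq A) (t : seq C) :
  size s = size t -> {in t &, forall y y', R2 (G y) (G y') = R3 y y'} ->
  Agree R1 R2 (zip s (map G t)) -> Agree R1 R3 (zip s t).
Proof.
move=> st hG h x y hx; have a0 := x.1; have c0 := x.2; move: hx.
move=> /(zip_memP a0 c0 st) [i hi ->] /(zip_memP a0 c0 st) [j hj ->].
have st' : size s = size (map G t) by rewrite size_map.
have := h _ _ (zip_mem_nth a0 (G c0) st' hi) (zip_mem_nth a0 (G c0) st' hj).
rewrite !(nth_map c0) -?st // => ->; apply: hG; apply: mem_nth; by rewrite -st.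
Qed.

Lemma contains_size p r : contains p r -> size p <= size r.
Proof. by case=> A <-; rewrite size_map size_subseq // mask_subseq. Qed.

Lemma contains_eq p r : is_perm r -> contains p r -> size p = size r -> p = r.
Proof.
move=> pr [A <-]; rewrite size_map => e.
have hl := size_subseq_leqif (mask_subseq A r).
have /eqP em : mask A r == r by rewrite -hl.2 e.
by rewrite /restrict em std_perm.
Qed.

Definition Ent := (nat * nat * bool)%type.
Definition IEnt := (nat * Ent)%type.

Definition E_idx (ps : seq nat) (w : seq (seq Ent)) : seq IEnt :=
  flatten (map (fun pl => map (pair pl.1) pl.2) (zip ps w)).
Definition Ew (w : seq (seq Ent)) := E_idx (iota 0 (size w)) w.

Definition cmp (e e' : IEnt) : bool :=
  if e.2.1.1 != e'.2.1.1 then e.2.1.1 < e'.2.1.1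
  else if e.1 == e'.1 then e.2.1.2 < e'.2.1.2
  else if e.2.2 then e.1 < e'.1 else e'.1 < e.1.

Definition Repr (pi : seq nat) (w : seq (seq Ent)) :=
  is_perm pi /\ size pi = size (Ew w) /\ Agree ltn cmp (zip pi (Ew w)).

Definition Amask (m : bitseq) (w : seq (seq Ent)) : bitseq :=
  flatten (map (fun bl => nseq (size bl.2) bl.1) (zip m w)).

Lemma E_idx_cons P ps L w : E_idx (P :: ps) (L :: w) = map (pair P) L ++ E_idx ps w.
Proof. by []. Qed.

Lemma Amask_cons b m L w : Amask (b :: m) (L :: w) = nseq (size L) b ++ Amask m w.
Proof. by []. Qed.

Lemma size_E_idx ps w : size ps = size w -> size (E_idx ps w) = sumn (map size w).
Proof.
elim: w ps => [|L w IH] [|P ps] //= [e]; by rewrite E_idx_cons size_cat size_map IH.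
Qed.

Lemma size_Amask m w : size m = size w -> size (Amask m w) = sumn (map size w).
Proof.
elim: w m => [|L w IH] [|b m] //= [e]; by rewrite Amask_cons size_cat size_nseq IH.
Qed.

Lemma mask_E_idx m ps w : size m = size w -> size ps = size w ->
  mask (Amask m w) (E_idx ps w) = E_idx (mask m ps) (mask m w).
Proof.
elim: w m ps => [|L w IH] [|b m] [|P ps] //= [e1] [e2].
rewrite Amask_cons E_idx_cons mask_cat ?size_nseq ?size_map //; case: b => /=.
- by rewrite mask_true ?size_map // IH // E_idx_cons.
- by rewrite mask_false IH.
Qed.

Lemma E_idx_map (G : nat -> nat) qs u : size qs = size u ->
  E_idx (map G qs) u = map (fun e => (G e.1, e.2)) (E_idx qs u).
Proof.
elim: u qs => [|L u IH] [|P qs] //= [e].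
by rewrite !E_idx_cons map_cat IH // -!map_comp.
Qed.

Lemma E_idx_mem ps u e : e \in E_idx ps u -> e.1 \in ps.
Proof.
elim: u ps => [|L u IH] [|P ps] //=; rewrite E_idx_cons mem_cat => /orP[/mapP[x _ ->]|h].
- by rewrite inE eqxx.
- by rewrite inE (IH _ h) orbT.
Qed.

Lemma cmp_relabel (G : nat -> nat) (D : pred nat) e e' :
  {in D &, forall a b, (G a < G b) = (a < b)} -> e.1 \in D -> e'.1 \in D ->
  cmp (G e.1, e.2) (G e'.1, e'.2) = cmp e e'.
Proof.
move=> hG d1 d2; rewrite /cmp /=.
have heq : (G e.1 == G e'.1) = (e.1 == e'.1).
  case: (ltngtP e.1 e'.1) => h.
  - by rewrite (ltn_eqF (etrans (hG _ _ d1 d2) h)).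
  - by rewrite eq_sym (ltn_eqF (etrans (hG _ _ d2 d1) h)).
  - by rewrite h eqxx.
by rewrite heq (hG _ _ d1 d2) (hG _ _ d2 d1).
Qed.

Lemma embed pi rho u w : Repr pi u -> Repr rho w -> subseq u w -> contains pi rho.
Proof.
move=> [ppi [spi api]] [prho [srho arho]] /subseqP [m sm eu]; subst u.
set u' := mask m w.
set A := Amask m w.
set ps := mask m (iota 0 (size w)).
have sps : size ps = size u' by rewrite /ps /u' !size_mask ?size_iota.
have sA : size A = size rho by rewrite srho /A size_Amask // /Ew size_E_idx // size_iota.
have e1 : mask A (Ew w) = map (fun e => (nth 0 ps e.1, e.2)) (Ew u').
  rewrite /Ew /A mask_E_idx ?size_iota // -/ps -/u' -E_idx_map ?size_iota //.
  by rewrite -sps; have := mkseq_nth 0 ps; rewrite /mkseq => ->.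
have sorted_ps : sorted ltn ps by apply: sorted_mask => //; [exact: ltn_trans|exact: iota_ltn_sorted].
have hG : {in (fun a => a < size u') &, forall a b, (nth 0 ps a < nth 0 ps b) = (a < b)}.
  move=> a b ha hb.
  have hom := sorted_ltn_nth ltn_trans 0 sorted_ps.
  have ha' : a \in [pred n | n < size ps] by rewrite inE sps.
  have hb' : b \in [pred n | n < size ps] by rewrite inE sps.
  case: (ltngtP a b) => h.
  - exact: hom.
  - by apply/negbTE; rewrite -leqNgt ltnW // hom.
  - by rewrite h ltnn.
exists A; rewrite /restrict.
have ag1 : Agree ltn cmp (zip (mask A rho) (mask A (Ew w))).
  rewrite -mask_zip //; apply: agree_sub arho => x; exact: mem_mask.
rewrite e1 in ag1.
have sX : size (mask A rho) = size (Ew u').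
  by rewrite size_mask // -(size_map (fun e : IEnt => (nth 0 ps e.1, e.2))) -e1 size_mask // -srho.
have ag2 : Agree ltn cmp (zip (mask A rho) (Ew u')).
  apply: (agree_map (G := fun e : IEnt => (nth 0 ps e.1, e.2))) sX _ ag1.
  move=> y y' hy hy'; apply: (cmp_relabel (D := fun a => a < size u')) => //.
  - by have := E_idx_mem hy; rewrite mem_iota.
  - by have := E_idx_mem hy'; rewrite mem_iota.
have ag3 : Agree ltn ltn (zip (mask A rho) pi).
  exact: (agree_trans 0 (0, (0, 0, true)) 0 sX (esym spi) ag2 api).
rewrite (std_agree _ ag3) ?std_perm //; by rewrite sX spi.
Qed.

Section Higman.
Variable T : eqType.
Variable alph : seq T.

Definition okw (w : seq T) := all (fun x => x \in alph) w.
Definition bad (f : nat -> seq T) :=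
  (forall n, okw (f n)) /\ (forall i j, i < j -> ~~ subseq (f i) (f j)).

Definition ext (s : seq (seq T)) : Prop :=
  exists f, bad f /\ forall i, i < size s -> f i = nth [::] s i.

Lemma min_exists (Q : nat -> Prop) : (exists n, Q n) -> exists n, Q n /\ forall m, Q m -> n <= m.
Proof.
move=> [n qn]; elim: n {-2}n (leqnn n) qn => [|N IH] n hn qn.
- exists n; split => // m _; by move: hn; rewrite leqn0 => /eqP ->.
- case: (classic (exists m, m < n /\ Q m)) => [[m [hm qm]]|h].
  + apply: (IH m) => //; rewrite -ltnS; exact: leq_trans hm hn.
  + exists n; split => // m qm; rewrite leqNgt; apply/negP => hm; apply: h; by exists m.
Qed.

Definition stepP (s : seq (seq T)) (w : seq T) :=
  ext (rcons s w) /\ forall w', ext (rcons s w') -> size w <= size w'.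

Definition step (s : seq (seq T)) : seq T := epsilon (inhabits [::]) (stepP s).

Lemma step_spec s : ext s -> stepP s (step s).
Proof.
move=> [f [bf hf]]; apply: epsilon_spec.
have e1 : ext (rcons s (f (size s))).
  exists f; split => // i hi.
  rewrite size_rcons ltnS leq_eqVlt in hi; rewrite nth_rcons.
  case/orP: hi => [/eqP ->|hi]; first by rewrite ltnn eqxx.
  by rewrite hi hf.
have [n [[w [sw ew]] mn]] := @min_exists (fun n => exists w, size w = n /\ ext (rcons s w))
  (ex_intro _ (size (f (size s))) (ex_intro _ (f (size s)) (conj erefl e1))).
exists w; split => // w' e'; rewrite sw; apply: mn; by exists w'.
Qed.

Fixpoint pre (n : nat) : seq (seq T) :=
  if n is n'.+1 then rcons (pre n') (step (pre n')) else [::].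

Lemma size_pre n : size (pre n) = n.
Proof. by elim: n => //= n IH; rewrite size_rcons IH. Qed.

Definition g n := step (pre n).

Lemma nth_pre n i : i < n -> nth [::] (pre n) i = g i.
Proof.
elim: n => // n IH; rewrite ltnS leq_eqVlt => /orP[/eqP ->|hi] /=.
- by rewrite nth_rcons size_pre ltnn eqxx.
- by rewrite nth_rcons size_pre hi IH.
Qed.

Hypothesis ext0 : ext [::].

Lemma ext_pre n : ext (pre n).
Proof. elim: n => //= n IH; by case: (step_spec IH). Qed.

Lemma g_bad : bad g.
Proof.
split.
- move=> n; have [f [[okf _] hf]] := ext_pre n.+1.
  by rewrite -(nth_pre (ltnSn n)) -hf ?size_pre.
- move=> i j hij; have [f [[_ bf] hf]] := ext_pre j.+1.
  have hi : i < j.+1 by apply: ltnW.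
  rewrite -(nth_pre (ltnSn j)) -(nth_pre hi) -!hf ?size_pre //.
  exact: bf.
Qed.

Lemma g_min n h : bad h -> (forall i, i < n -> h i = g i) -> size (g n) <= size (h n).
Proof.
move=> bh hh; have [_ m] := step_spec (ext_pre n); apply: m.
exists h; split => // i; rewrite size_rcons size_pre ltnS leq_eqVlt nth_rcons size_pre.
case/orP => [/eqP ->|hi]; first by rewrite ltnn eqxx.
by rewrite hi nth_pre // hh.
Qed.

End Higman.

Lemma subseq_behead (T : eqType) (s : seq T) : subseq (behead s) s.
Proof. case: s => //= x s; exact: subseq_cons. Qed.

Lemma uniform_bound (T : eqType) (P : T -> nat -> Prop) (l : seq T) :
  (forall a, exists N, forall n, N <= n -> P a n) ->
  exists N, forall a, a \in l -> forall n, N <= n -> P a n.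
Proof.
move=> H; elim: l => [|b l [N2 h2]]; first by exists 0.
have [N1 h1] := H b.
exists (maxn N1 N2) => c; rewrite inE => /orP[/eqP ->|hc] n hN.
- apply: h1; exact: leq_trans (leq_maxl _ _) hN.
- apply: h2 => //; exact: leq_trans (leq_maxr _ _) hN.
Qed.

Theorem higman (T : eqType) (alph : seq T) (f : nat -> seq T) :
  (forall n, okw alph (f n)) -> exists i j, i < j /\ subseq (f i) (f j).
Proof.
move=> okf; apply: NNPP => nex.
have bf : bad alph f.
  split => // i j hij; apply/negP => hs; apply: nex; by exists i, j.
have e0 : ext alph [::] by exists f.
have [okG bG] := g_bad e0.
have ne n : (g alph) n <> [::].
  move=> e; have := bG n n.+1 (ltnSn n); by rewrite e sub0seq.
have [x0 _] : exists x0 : T, True by case: (g alph 0) (ne 0) => // y ? _; exists y.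
pose hd n := head x0 ((g alph) n).
have hd_in n : hd n \in alph.
  have := okG n; rewrite /hd; case: ((g alph) n) (ne n) => //= y s _ /andP[] //.
have [a ha] : exists a, forall N, exists n, N <= n /\ hd n = a.
  apply: NNPP => hn.
  have hn' : forall a, exists N, forall n, N <= n -> hd n <> a.
    move=> a; apply: NNPP => h1; apply: hn; exists a => N; apply: NNPP => h2; apply: h1.
    exists N => n hN e; apply: h2; by exists n.
  have : exists N, forall a, a \in alph -> forall n, N <= n -> hd n <> a.
    exact: (@uniform_bound T (fun a n => hd n <> a) alph hn').
  move=> [N hN]; exact: (hN _ (hd_in N) N (leqnn N)).
pose nxt N := epsilon (inhabits 0) (fun n => N <= n /\ hd n = a).
have nxt_spec N : N <= nxt N /\ hd (nxt N) = a := epsilon_spec (inhabits 0) (fun n => N <= n /\ hd n = a) (ha N).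
pose fix phi m := if m is m'.+1 then nxt (phi m').+1 else nxt 0.
have phi_hd m : hd (phi m) = a by case: m => [|m] /=; [case: (nxt_spec 0) | case: (nxt_spec (phi m).+1)].
have phi_S m : phi m < phi m.+1 by case: (nxt_spec (phi m).+1).
have phi_mono m m' : m < m' -> phi m < phi m'.
  elim: m' => // m' IH; rewrite ltnS leq_eqVlt => /orP[/eqP ->|h]; first exact: phi_S.
  exact: ltn_trans (IH h) (phi_S m').
set n0 := phi 0.
pose h i := if i < n0 then (g alph) i else behead ((g alph) (phi (i - n0))).
have okh : forall n, okw alph (h n).
  move=> n; rewrite /h; case: ifP => _ //.
  have := okG (phi (n - n0)); rewrite /okw; case: ((g alph) _) => //= ? ? /andP[] //.
have hmin := g_min e0 (n:=n0) (h:=h).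
have nb : ~ bad alph h.
  move=> bh.
  have hh : forall i, i < n0 -> h i = g alph i by move=> i hi; rewrite /h hi.
  have := hmin bh hh; rewrite /h ltnn subnn.
  by case: ((g alph) n0) (ne n0) => //= ? ? _; rewrite ltnn.
have [i [j [hij hs]]] : exists i j, i < j /\ subseq (h i) (h j).
  apply: NNPP => hn; apply: nb; split => // i j hij; apply/negP => hs; apply: hn; by exists i, j.
move: hs; rewrite /h.
case: (ltnP j n0) => hj.
- rewrite (ltn_trans hij hj) => hs; have := bG i j hij; by rewrite hs.
case: (ltnP i n0) => hi.
- move=> hs; have hs' := subseq_trans hs (subseq_behead _).
  have hl : i < phi (j - n0).
    apply: (leq_trans hi); case: (j - n0) => [|m] //; exact: ltnW (phi_mono 0 m.+1 (ltn0Sn m)).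
  have := bG _ _ hl; by rewrite hs'.
- move=> hs.
  have hm : i - n0 < j - n0 by lia.
  have := bG _ _ (phi_mono _ _ hm).
  have e1 := phi_hd (i - n0); have e2 := phi_hd (j - n0).
  move: hs e1 e2; rewrite /hd.
  case: (g alph (phi (i - n0))) (ne (phi (i - n0))) => // y s _.
  case: (g alph (phi (j - n0))) (ne (phi (j - n0))) => // y' s' _ /= hs -> ->.
  by rewrite eqxx hs.
Qed.

Lemma foldr_max_ge x s : x \in s -> x <= foldr maxn 0 s.
Proof.
elim: s => //= y s IH; rewrite inE => /orP[/eqP ->|h]; first exact: leq_maxl.
exact: leq_trans (IH h) (leq_maxr _ _).
Qed.

Lemma foldr_max_in s : s != [::] -> foldr maxn 0 s \in s.
Proof.
elim: s => // y s IH _.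
case: s IH => [|z s] IH; first by rewrite /= maxn0 inE eqxx.
have hm := IH isT; move: hm.
set m := foldr maxn 0 (z :: s) => hm.
have -> : foldr maxn 0 [:: y, z & s] = maxn y m by [].
rewrite inE; case: (leqP y m) => h.
- by rewrite hm orbT.
- by rewrite eqxx.
Qed.

Lemma inH_nil k : 0 < k -> inH k (std [::]).
Proof. by move=> hk; rewrite /inH /h_plus /plus_cuts /max_block /= hk. Qed.

Lemma inH_one k x : 1 < k -> inH k (std [:: x]).
Proof. by move=> hk; rewrite /inH /h_plus /plus_cuts /max_block /std /= ltnn /= hk. Qed.

Lemma longest_spec k r : 1 < k -> 0 < size r ->
  0 < longest k r <= size r /\ inH k (std (take (longest k r) r)).
Proof.
move=> hk hr.
pose s := [seq L <- iota 0 (size r).+1 | inH k (std (take L r))].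
have el : longest k r = foldr maxn 0 s by [].
rewrite el.
have h1 : 1 \in s.
  rewrite mem_filter mem_iota /= ltnS hr andbT.
  case: r hr {el s} => // x r _ /=; rewrite take0; exact: inH_one.
have hne : s != [::] by apply/eqP => e; rewrite e in h1.
have := foldr_max_in hne; rewrite mem_filter mem_iota /= ltnS => /andP[hH hl].
split => //; rewrite hl andbT.
exact: leq_trans (foldr_max_ge h1).
Qed.

Lemma greedy_spec k : 1 < k -> forall f r, size r <= f ->
  exists Q : seq (seq nat), flatten Q = r /\ size Q = greedy f k r /\ all (fun q => inH k (std q)) Q.
Proof.
move=> hk; elim=> [|f IH] r hr.
- exists [::]; by case: r hr.
- case: r hr => [|x r'] hr; first by exists [::].
  set r := x :: r'.
  have [/andP[h0 hl] hH] := longest_spec hk (isT : 0 < size r).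
  have hsz : size (drop (longest k r) r) <= f.
    rewrite size_drop; move: hr h0; rewrite /r /=; lia.
  have [Q [e1 [e2 e3]]] := IH (drop (longest k r) r) hsz.
  exists (take (longest k r) r :: Q); split; first by rewrite /= e1 cat_take_drop.
  by split; [rewrite /= e2 | rewrite /= hH e3].
Qed.

Lemma plus_sep (s : seq nat) x x' y : uniq s -> all (fun v => v < x) (take x s) ->
  x' < x -> x <= y -> y < size s -> nth 0 s x' < nth 0 s y.
Proof.
move=> us hall hx' hxy hy.
have hxs : x <= size s by apply: leq_trans hxy (ltnW hy).
have hin : nth 0 s x' \in take x s by rewrite -(nth_take 0 hx'); apply: mem_nth; rewrite size_takel.
have hlt := allP hall _ hin.
apply: (leq_trans hlt); rewrite leqNgt; apply/negP => hyx.
have hnot : nth 0 s y \notin take x s.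
  have := us; rewrite -[in uniq s](cat_take_drop x s) cat_uniq => /and3P[_ /hasPn hd _].
  apply: hd; rewrite -[y](subnKC hxy) -nth_drop; apply: mem_nth.
  rewrite size_drop; apply: ltn_sub2r => //; exact: leq_ltn_trans hxy hy.
have u2 : uniq (nth 0 s y :: take x s) by rewrite /= hnot take_uniq.
have sub : {subset nth 0 s y :: take x s <= iota 0 x}.
  move=> z; rewrite inE mem_iota /= => /orP[/eqP ->|hz] //; exact: allP hall _ hz.
have := uniq_leq_size u2 sub; by rewrite /= size_takel // size_iota ltnn.
Qed.

Lemma minus_sep (s : seq nat) x x' y : is_perm s -> all (fun v => size s - x <= v) (take x s) ->
  x' < x -> x <= y -> y < size s -> nth 0 s y < nth 0 s x'.
Proof.
move=> ps hall hx' hxy hy.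
have us := perm_uniq_ ps.
have hxs : x <= size s by apply: leq_trans hxy (ltnW hy).
have hin : nth 0 s x' \in take x s by rewrite -(nth_take 0 hx'); apply: mem_nth; rewrite size_takel.
have hlt := allP hall _ hin.
apply: (leq_trans _ hlt); rewrite ltnNge; apply/negP => hyx.
have hnot : nth 0 s y \notin take x s.
  have := us; rewrite -[in uniq s](cat_take_drop x s) cat_uniq => /and3P[_ /hasPn hd _].
  apply: hd; rewrite -[y](subnKC hxy) -nth_drop; apply: mem_nth.
  rewrite size_drop; apply: ltn_sub2r => //; exact: leq_ltn_trans hxy hy.
have u2 : uniq (nth 0 s y :: take x s) by rewrite /= hnot take_uniq.
have sub : {subset nth 0 s y :: take x s <= iota (size s - x) x}.
  move=> z; rewrite inE mem_iota subnK // => /orP[/eqP ->|hz].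
  + by rewrite hyx /= perm_lt // mem_nth.
  + by rewrite (allP hall _ hz) perm_lt // (mem_take hz).
have := uniq_leq_size u2 sub; by rewrite /= size_takel // size_iota ltnn.
Qed.

Lemma gap_gen a cs x y : sorted ltn (a :: cs) -> a <= x -> x <= y -> y < last a cs ->
  (forall c, c \in cs -> x < c -> y < c) ->
  y - x < foldr maxn 0 (pairmap (fun a b => b - a) a cs).
Proof.
elim: cs a => [|c cs IH] a /=; first by move=> _ h1 h2 h3; have := leq_ltn_trans h1 (leq_ltn_trans h2 h3); rewrite ltnn.
move=> /andP[hac hs] hax hxy hyl hc.
case: (leqP c x) => hcx.
- apply: leq_trans (leq_maxr _ _); apply: IH => //.
  by move=> c' hc'; apply: hc; rewrite inE hc' orbT.
- have hyc : y < c by apply: hc; rewrite ?inE ?eqxx.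
  apply: leq_trans (leq_maxl _ _); lia.
Qed.

Lemma gap_bound (C : pred nat) l x y : C l -> 0 < l -> x <= y -> y < l ->
  (forall c, x < c -> c <= y -> ~~ C c) ->
  y - x < max_block (filter C (iota 1 l)).
Proof.
move=> Cl hl hxy hyl hno; rewrite /max_block; apply: gap_gen => //.
- have : sorted ltn (filter (fun z => (z == 0) || C z) (0 :: iota 1 l)).
    apply: sorted_filter; [exact: ltn_trans | exact: (iota_ltn_sorted 0 l.+1)].
  rewrite /= (eq_in_filter (a1 := fun z => (z == 0) || C z) (a2 := C) (s := iota 1 l)) //.
  move=> z; rewrite mem_iota => /andP[hz _]; by rewrite (gtn_eqF hz).
- have -> : iota 1 l = rcons (iota 1 l.-1) l.
    have := iotaD 1 l.-1 1; rewrite addn1 prednK // => ->; by rewrite cats1 add1n prednK.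
  by rewrite filter_rcons Cl last_rcons.
- move=> c; rewrite mem_filter => /andP[hC _] hxc; rewrite ltnNge; apply/negP => hcy.
  by have := hno c hxc hcy; rewrite hC.
Qed.

Lemma const_step (F : nat -> nat) i j : i <= j -> (forall m, i < m <= j -> F m = F m.-1) -> F j = F i.
Proof.
elim: j => [|j IH]; first by rewrite leqn0 => /eqP ->.
rewrite leq_eqVlt => /orP[/eqP -> //|hij] h.
rewrite (h j.+1) /=; last by rewrite hij leqnn.
apply: IH => // m /andP[h1 h2]; apply: h; by rewrite h1 (leq_trans h2).
Qed.

Lemma pigeon (s : seq nat) (a : pred nat) (f : nat -> nat) N T :
  (forall c, c < N -> count (fun j => a j && (f j == c)) s <= T) ->
  count (fun j => a j && (f j < N)) s <= N * T.
Proof.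
elim: N => [|N IH] h.
- by rewrite (eq_count (a2 := pred0)) ?count_pred0 // => j; rewrite ltn0 andbF.
- have e : count (fun j => a j && (f j < N.+1)) s =
          count (fun j => a j && (f j < N)) s + count (fun j => a j && (f j == N)) s.
    rewrite -count_predUI (eq_count (a1 := predI _ _) (a2 := pred0)) ?count_pred0 ?addn0.
    + apply: eq_count => j /=; rewrite ltnS leq_eqVlt; by case: (a j); rewrite //= orbC.
    + move=> j /=; case: (a j) => //=; case: (ltngtP (f j) N) => //.
  rewrite e mulSn addnC; apply: leq_add; first exact: h.
  apply: IH => c hc; apply: h; exact: ltnW.
Qed.

Lemma flatten_filter (p : nat -> nat) : forall N m s,
  sorted (relpre p leq) s -> all (fun i => m <= p i < m + N) s ->
  flatten [seq filter (fun i => p i == P) s | P <- iota m N] = s.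
Proof.
elim=> [|N IHN] m s hs ha.
- by case: s ha hs => //= i s /andP[/andP[h1 h2] _]; rewrite addn0 in h2; have := leq_trans h2 h1; rewrite ltnn.
- elim: s hs ha => [|i s IHs] hs ha.
  + by elim: (iota m N.+1).
  + have hs' : sorted (relpre p leq) s := path_sorted hs.
    have hmin : all (fun j => p i <= p j) s.
      have := order_path_min (leT := relpre p leq) _ hs; apply.
      move=> b c d /= h1 h2; exact: leq_trans h1 h2.
    move: ha => /= /andP[/andP[hmi hiN] ha].
    case: (ltngtP (p i) m) => him.
    * by have := leq_trans him hmi; rewrite ltnn.
    * have e0 : filter (fun j => p j == m) s = [::].
        apply/eqP; rewrite -size_eq0 size_filter -leqn0 leqNgt -has_count; apply/hasP => -[j hj /eqP e].
        by have := allP hmin _ hj; rewrite e leqNgt him.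
      rewrite e0 /=.
      have ha' : all (fun j => m.+1 <= p j < m.+1 + N) (i :: s).
        rewrite /= him addSnnS hiN /=; apply/allP => j hj.
        have h1 := allP hmin j hj; have /andP[_ h2] := allP ha j hj.
        by rewrite (leq_trans him h1) h2.
      exact: (IHN m.+1 (i :: s) hs ha').
    * have key : forall P, P \in iota m.+1 N -> (if p i == P then i :: filter (fun j => p j == P) s else filter (fun j => p j == P) s) = filter (fun j => p j == P) s.
        move=> P; rewrite mem_iota => /andP[hP _]; by rewrite him (ltn_eqF hP).
      rewrite (_ : map _ (iota m.+1 N) = map (fun P => filter (fun j => p j == P) s) (iota m.+1 N)); last by apply/eq_in_map.
      rewrite /=.
      congr (_ :: _); exact: (IHs hs' ha).
Qed.

Definition pairs (J : seq nat) := flatten [seq [:: j.-1; j] | j <- J].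

Lemma size_pairs J : size (pairs J) = (size J).*2.
Proof. by elim: J => //= j J IH; rewrite /pairs /= -/(pairs J) IH doubleS. Qed.

Lemma nth_pairs J i : i < (size J).*2 ->
  nth 0 (pairs J) i = if odd i then nth 0 J i./2 else (nth 0 J i./2).-1.
Proof.
elim: J i => [|j J IH] i //=; rewrite /pairs /= -/(pairs J).
case: i => [|[|i]] //= hi.
rewrite IH; last by rewrite doubleS !ltnS in hi.
by rewrite negbK.
Qed.

Lemma sorted_pairs J : sorted ltn J -> all (fun j => 0 < j) J ->
  (forall j j', j \in J -> j' \in J -> j' != j.+1) -> sorted ltn (pairs J).
Proof.
elim: J => [|j J IH] //= hs /andP[hj hall] hgap.
rewrite /pairs /= -/(pairs J).
have hs' : sorted ltn J := path_sorted hs.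
have IH' : sorted ltn (pairs J).
  by apply: IH => // a b ha hb; apply: hgap; rewrite inE ?ha ?hb orbT.
rewrite ltn_predL hj /=.
case: J hs hall hgap IH' {IH hs'} => [|j' J] //= /andP[hjj' _] _ hgap IH'.
rewrite /pairs /= -/(pairs J) in IH' *.
apply/andP; split => //.
have hne : j' != j.+1 by apply: hgap; rewrite !inE eqxx ?orbT.
have h2 : j.+1 < j' by rewrite ltn_neqAle eq_sym hne hjj'.
move: h2; clear; lia.
Qed.

Lemma all_pairs J (P : pred nat) : (forall j, j \in J -> P j /\ P j.-1) -> all P (pairs J).
Proof.
elim: J => [|j J IH] //= h; rewrite /pairs /= -/(pairs J).
have [h1 h2] := h j (mem_head _ _).
by rewrite h1 h2 IH // => j' hj'; apply: h; rewrite inE hj' orbT.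
Qed.

Lemma sorted_behead_ltn (s : seq nat) : sorted ltn s -> sorted ltn (behead s).
Proof. case: s => //= a r; exact: path_sorted. Qed.

Lemma all_behead (P : pred nat) (s : seq nat) : all P s -> all P (behead s).
Proof. by case: s => //= a r /andP[]. Qed.
Fixpoint allseqs (T : Type) (d : nat) (base : seq T) : seq (seq T) :=
  if d is d'.+1 then [::] :: [seq x :: s | x <- base, s <- allseqs d' base] else [:: [::]].

Lemma allseqsP (T : eqType) d (base : seq T) L :
  size L <= d -> all (fun x => x \in base) L -> L \in allseqs d base.
Proof.
elim: d L => [|d IH] [|x L] //= hs /andP[hx hL].
rewrite inE; apply/orP; right; apply: (@allpairs_f _ _ _ (fun x s => x :: s)) => //; exact: IH.
Qed.

Definition Mb K := (K * K * K).+1.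
Definition base k K : seq Ent :=
  [seq (bq, s) | bq <- [seq (b, q) | b <- iota 0 (Mb K), q <- iota 0 k], s <- [:: true; false]].
Definition alph k K := allseqs k.-1 (base k K).

Lemma in_alph k K (L : seq Ent) : 0 < k -> size L < k ->
  (forall x, x \in L -> x.1.1 < Mb K /\ x.1.2 < k) -> L \in alph k K.
Proof.
move=> hk hs hx; apply: allseqsP; first by rewrite -ltnS prednK.
apply/allP => -[[b q] s] /hx /= [hb hq].
apply: (@allpairs_f _ _ _ (fun (bq : nat * nat) (s : bool) => (bq, s))).
- by apply: (@allpairs_f _ _ _ (fun b q : nat => (b, q))); rewrite mem_iota.
- by case: s; rewrite !inE.
Qed.

Section Enc.
Variables (k K : nat) (pi : seq nat) (Q : seq (seq nat)).
Hypotheses (hk : 1 < k) (pp : is_perm pi) (al : al_lt pi K) (hQ : flatten Q = pi)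
  (sQ : size Q < K) (HQ : all (fun q => inH k (std q)) Q).

Definition col i := reshape_index (shape Q) i.
Definition off i := reshape_offset (shape Q) i.
Definition piece c := nth [::] Q c.
Definition sig c := std (piece c).
Definition sg c := h_plus (sig c) < k.
Definition lcut c x := if sg c then all (fun v => v < x) (take x (sig c))
                       else all (fun v => size (sig c) - x <= v) (take x (sig c)).
Definition isStart j := (col j != col j.-1) || lcut (col j) (off j).
Definition pp_ i := count isStart (iota 1 i).
Definition lab v := col (index v pi).
Definition chg j := lab j.-1 != lab j.
Definition band v := count chg (iota 1 v).
Definition qq i := count (fun j => (pp_ j == pp_ i) && (nth 0 pi j < nth 0 pi i)) (iota 0 (size pi)).
Definition ent i : Ent := (band (nth 0 pi i), qq i, sg (col i)).
Definition word := [seq [seq ent i | i <- iota 0 (size pi) & pp_ i == P] | P <- iota 0 (size pi)].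

Lemma sumsh : sumn (shape Q) = size pi.
Proof. by rewrite -size_flatten hQ. Qed.

Lemma col_lt i : i < size pi -> col i < size Q.
Proof. by move=> hi; have := reshape_indexP (sh := shape Q) (i := i); rewrite sumsh size_map; apply. Qed.

Lemma off_lt i : i < size pi -> off i < size (piece (col i)).
Proof. by move=> hi; have := reshape_offsetP (sh := shape Q) (i := i); rewrite sumsh nth_shape; apply. Qed.

Lemma nth_col i : nth 0 pi i = nth 0 (piece (col i)) (off i).
Proof. by rewrite -hQ nth_flatten. Qed.

Lemma idx_col i : sumn (take (col i) (shape Q)) + off i = i.
Proof. exact: reshape_indexK. Qed.

Lemma col_mono i j : i <= j -> col i <= col j.
Proof.
rewrite (reshape_leq (shape Q) i j) -/(col i) -/(col j) -/(off i) -/(off j).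
by case/orP => [/ltnW //|/andP[/eqP -> _]].
Qed.

Lemma col_ltP i j : col i < col j -> i < j.
Proof. by move=> h; rewrite ltnNge; apply/negP => /col_mono; rewrite leqNgt h. Qed.

Lemma same_col i j : col i = col j -> off i + j = off j + i.
Proof.
move=> e; have h1 := idx_col i; have h2 := idx_col j; rewrite e in h1.
move: h1 h2; set b := sumn _; lia.
Qed.

Lemma piece_uniq c : uniq (piece c).
Proof.
rewrite /piece -(flattenK Q) hQ nth_reshape; apply: take_uniq; apply: drop_uniq; exact: perm_uniq_.
Qed.

Lemma sig_perm c : is_perm (sig c).
Proof. exact: std_perm_of_uniq (piece_uniq c). Qed.

Lemma size_sig c : size (sig c) = size (piece c).
Proof. exact: size_map. Qed.

Lemma sig_cmp c x y : x < size (piece c) -> y < size (piece c) ->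
  (nth 0 (sig c) x < nth 0 (sig c) y) = (nth 0 (piece c) x < nth 0 (piece c) y).
Proof. by move=> hx hy; rewrite !std_nth // rank_lt // mem_nth. Qed.

Lemma inH_piece c : c < size Q -> inH k (sig c).
Proof. by move=> hc; exact: (allP HQ) _ (mem_nth _ hc). Qed.

Lemma pp_split i j : i <= j -> pp_ j = pp_ i + count isStart (iota i.+1 (j - i)).
Proof. by move=> h; rewrite /pp_ -{1}(subnKC h) iotaD count_cat add1n. Qed.

Lemma pp_mono i j : i <= j -> pp_ i <= pp_ j.
Proof. by move=> h; rewrite (pp_split h) leq_addr. Qed.

Lemma pp_le i : pp_ i <= i.
Proof. by rewrite /pp_ -[X in _ <= X](size_iota 1 i) count_size. Qed.

Lemma pp_noStart i j m : i <= j -> pp_ i = pp_ j -> i < m <= j -> ~~ isStart m.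
Proof.
move=> h e hm; have := pp_split h; rewrite -e -{1}[pp_ i]addn0 => /eqP; rewrite eqn_add2l eq_sym.
move=> /eqP /eqP; rewrite -leqn0 leqNgt -has_count => /hasPn; apply.
rewrite mem_iota addSn subnKC //; case/andP: hm => h1 h2; by rewrite h1 /= ltnS.
Qed.

Lemma pp_eq_col i j : i <= j -> pp_ i = pp_ j -> col j = col i.
Proof.
move=> h e; apply: const_step => // m hm.
have := pp_noStart h e hm; rewrite /isStart negb_or => /andP[/negPn/eqP -> _] //.
Qed.

Lemma pp_lt_start i j : i <= j -> pp_ i < pp_ j -> exists2 m, i < m <= j & isStart m.
Proof.
move=> h; rewrite (pp_split h) -{1}[pp_ i]addn0 ltn_add2l -has_count => /hasP[m hm hs].
exists m => //; move: hm; rewrite mem_iota addSn subnKC //; case/andP => -> /=; by rewrite ltnS.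
Qed.

Lemma pi_uniq : uniq pi.
Proof. exact: perm_uniq_. Qed.

Lemma P2 i j : i < j -> j < size pi -> col i = col j -> pp_ i < pp_ j ->
  (nth 0 pi i < nth 0 pi j) = sg (col i).
Proof.
move=> hij hj ecol hp.
have [m /andP[him hmj] hs] := pp_lt_start (ltnW hij) hp.
have hcm : col m = col i.
  have h1 := col_mono (ltnW him); have h2 := col_mono hmj; move: h1 h2 ecol; clear; lia.
have hcm1 : col m.-1 = col i.
  have h1 : i <= m.-1 by move: him; clear; lia.
  have h2 := col_mono h1; have h3 := col_mono (leq_pred m); move: h2 h3 hcm; clear; lia.
move: hs; rewrite /isStart hcm hcm1 eqxx /= => hcut.
have e1 := same_col hcm; have e2 := same_col ecol.
have hom : off i < off m by move: e1 him; clear; lia.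
have hmj' : off m <= off j by move: e1 e2 hmj; clear; lia.
have hjl := off_lt hj; rewrite -ecol in hjl.
have hil : off i < size (piece (col i)) by apply: leq_ltn_trans _ hjl; move: hom hmj'; clear; lia.
rewrite !nth_col -ecol -(sig_cmp hil hjl).
move: hcut; rewrite /lcut; case: (sg (col i)) => hcut.
- apply: plus_sep hcut hom hmj' _ => //; first exact: perm_uniq_ (sig_perm _).
  by rewrite size_sig.
- apply/negbTE; rewrite -leqNgt; apply: ltnW.
  apply: minus_sep (sig_perm _) hcut hom hmj' _; by rewrite size_sig.
Qed.

Lemma block_small i j : i <= j -> j < size pi -> pp_ i = pp_ j -> (j - i).+1 < k.
Proof.
move=> hij hj e.
have ecol := pp_eq_col hij e.
set c := col i.
have hjl := off_lt hj; rewrite ecol -/c in hjl.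
have ej := same_col (esym ecol).
have hxy : off i <= off j by move: ej hij; clear; lia.
have hl : 0 < size (sig c) by rewrite size_sig; apply: leq_ltn_trans _ hjl.
have hjl' : off j < size (sig c) by rewrite size_sig.
have hno : forall x, off i < x -> x <= off j -> ~~ lcut c x.
  move=> x h1 h2.
  pose m := i + (x - off i).
  have hm : i < m <= j by apply/andP; split; rewrite /m; move: h1 h2 ej; clear; lia.
  have hns := pp_noStart hij e hm.
  have em : pp_ i = pp_ m.
    apply/eqP; rewrite eqn_leq pp_mono ?(ltnW (proj1 (andP hm))) //=.
    by rewrite e pp_mono // (proj2 (andP hm)).
  have cm := pp_eq_col (ltnW (proj1 (andP hm))) em.
  have om := same_col (esym cm).
  have -> : x = off m by move: om; rewrite /m; move: h1; clear; lia.
  by move: hns; rewrite /isStart negb_or cm -/c => /andP[_].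
have hH := inH_piece (col_lt (leq_ltn_trans hij hj)).
have hdiff : j - i = off j - off i by move: ej; clear; lia.
rewrite hdiff.
move: hno; rewrite /lcut; case hs: (sg c) => hno.
- have Cl : all (fun v => v < size (sig c)) (take (size (sig c)) (sig c)).
    by rewrite take_size; apply/allP => v hv; exact: perm_lt (sig_perm c) hv.
  have h := gap_bound (C := fun x => all (fun v => v < x) (take x (sig c))) Cl hl hxy hjl' hno.
  have hp : h_plus (sig c) < k := hs.
  exact: leq_ltn_trans h hp.
- have Cl : all (fun v => size (sig c) - size (sig c) <= v) (take (size (sig c)) (sig c)).
    by rewrite subnn; apply/allP.
  have h := gap_bound (C := fun x => all (fun v => size (sig c) - x <= v) (take x (sig c))) Cl hl hxy hjl' hno.
  have hp : h_minus (sig c) < k by move: hH; rewrite /inH -/(sg c) hs.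
  exact: leq_ltn_trans h hp.
Qed.

Lemma P3 P : size (filter (fun i => pp_ i == P) (iota 0 (size pi))) < k.
Proof.
set s := filter _ _.
case es : s => [|i0 s']; first by apply: ltnW.
have hsort : sorted ltn s by apply: sorted_filter; [exact: ltn_trans|exact: iota_ltn_sorted].
rewrite es /= in hsort.
have hmin := order_path_min ltn_trans hsort.
have hi0 : i0 \in s by rewrite es mem_head.
move: hi0; rewrite mem_filter mem_iota /= => /andP[/eqP hp0 hn0].
have us : uniq s by rewrite filter_uniq // iota_uniq.
have sub : {subset s <= iota i0 k.-1}.
  move=> m hm.
  have hm' := hm; rewrite es inE in hm'.
  have hle : i0 <= m by case/orP: hm' => [/eqP -> //|h]; exact: ltnW (allP hmin _ h).
  move: hm; rewrite mem_filter mem_iota /= => /andP[/eqP hpm hmn].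
  have := block_small hle hmn (etrans hp0 (esym hpm)).
  rewrite mem_iota hle /=; move: hk; clear; lia.
have h := uniq_leq_size us sub; rewrite size_iota es in h.
apply: leq_ltn_trans h _; move: hk; clear; lia.
Qed.

Lemma qq_lt i : i < size pi -> qq i < k.
Proof.
move=> hi; apply: leq_ltn_trans (P3 (pp_ i)); rewrite size_filter.
by apply: sub_count => z /andP[].
Qed.

Lemma qq_cmp i j : i < size pi -> j < size pi -> pp_ i = pp_ j ->
  (qq i < qq j) = (nth 0 pi i < nth 0 pi j).
Proof.
move=> hi hj e; rewrite /qq e.
case: (ltnP (nth 0 pi i) (nth 0 pi j)) => h.
- apply: (count_strict (x := i)) => /=.
  + move=> z /andP[-> hz] /=; exact: ltn_trans hz h.
  + by rewrite mem_iota.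
  + by rewrite e eqxx h.
  + by rewrite ltnn andbF.
- apply/negbTE; rewrite -leqNgt; apply: sub_count => z /andP[-> hz] /=; exact: leq_trans hz h.
Qed.

Lemma mem_pi v : (v \in pi) = (v < size pi).
Proof. by rewrite (perm_mem pp) mem_iota. Qed.

Lemma idx_nth i : i < size pi -> index (nth 0 pi i) pi = i.
Proof. by move=> hi; rewrite index_uniq // pi_uniq. Qed.

Lemma lab_nth i : i < size pi -> lab (nth 0 pi i) = col i.
Proof. by move=> hi; rewrite /lab idx_nth. Qed.

Lemma nth_lt i : i < size pi -> nth 0 pi i < size pi.
Proof. by move=> hi; rewrite -mem_pi mem_nth. Qed.

Lemma band_mono v v' : v <= v' -> band v <= band v'.
Proof. by move=> h; rewrite /band -(subnKC h) iotaD count_cat leq_addr. Qed.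

Lemma band_eq v v' : v <= v' -> band v = band v' -> lab v' = lab v.
Proof.
move=> h e; apply: const_step => // m /andP[h1 h2].
move: e; rewrite /band -(subnKC h) iotaD count_cat -{1}[count chg (iota 1 v)]addn0 => /eqP.
rewrite eqn_add2l eq_sym -leqn0 leqNgt -has_count => /hasPn /(_ m) hm.
apply/eqP; rewrite eq_sym; apply/negPn; apply: hm.
by rewrite mem_iota add1n addSn subnKC // h1 ltnS.
Qed.

Lemma cmpE P b q s P' b' q' s' :
  cmp (P, (b, q, s)) (P', (b', q', s')) =
  if b != b' then b < b' else if P == P' then q < q' else if s then P < P' else P' < P.
Proof. by []. Qed.

Lemma claimA i j : i < size pi -> j < size pi ->
  (nth 0 pi i < nth 0 pi j) = cmp (pp_ i, ent i) (pp_ j, ent j).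
Proof.
move=> hi hj; rewrite /ent cmpE.
set a := nth 0 pi i; set b := nth 0 pi j.
case: (ltngtP (band a) (band b)) => hb; rewrite [RHS]/=.
- apply/idP; rewrite ltnNge; apply/negP => /band_mono; by rewrite leqNgt hb.
- apply/negbTE; rewrite -leqNgt; apply: ltnW; rewrite ltnNge; apply/negP => /band_mono; by rewrite leqNgt hb.
- have ecol : col i = col j.
    rewrite -(lab_nth hi) -(lab_nth hj) -/a -/b.
    case: (leqP a b) => h; first by rewrite (band_eq h hb).
    by rewrite (band_eq (ltnW h) (esym hb)).
  case: (ltngtP (pp_ i) (pp_ j)) => hp.
  + have hij : i < j by rewrite ltnNge; apply/negP => /pp_mono; rewrite leqNgt hp.
    by rewrite P2 // ; case: (sg (col i)).
  + have hji : j < i by rewrite ltnNge; apply/negP => /pp_mono; rewrite leqNgt hp.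
    have := P2 hji hi (esym ecol) hp; rewrite -ecol => h2.
    have hab : a != b.
      apply/eqP => eab; have := idx_nth hi; rewrite -/a eab -/b idx_nth // => eji.
      by rewrite eji ltnn in hji.
    case: (sg (col i)) h2 => h2 /=.
    * by apply/negbTE; rewrite -leqNgt ltnW.
    * by move: h2 hab; rewrite /a /b; case: ltngtP.
  + by rewrite qq_cmp.
Qed.

Lemma K_pos : 0 < K.
Proof. exact: leq_ltn_trans (leq0n _) sQ. Qed.

Definition code j := lab j.-1 * K + lab j.

Lemma lab_ltK v : v < size pi -> lab v < K.
Proof.
move=> hv; have h : index v pi < size pi by rewrite index_mem mem_pi.
exact: ltn_trans (col_lt h) sQ.
Qed.

Lemma code_inj a b a' b' : b < K -> b' < K -> a * K + b = a' * K + b' -> a = a' /\ b = b'.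
Proof.
move=> hb hb' e.
have e1 := congr1 (divn^~ K) e; rewrite /= !divnMDl ?K_pos // !divn_small // !addn0 in e1.
have e2 := congr1 (modn^~ K) e; rewrite /= !modnMDl !modn_small // in e2.
Qed.

Lemma minn_lt_maxn x y : x != y -> minn x y < maxn x y.
Proof. by case: (ltngtP x y) => // h _; rewrite ?(minn_idPl (ltnW h)) ?(maxn_idPr (ltnW h)) ?(minn_idPr (ltnW h)) ?(maxn_idPl (ltnW h)). Qed.

Lemma alt_contra c : K <= count (fun j => chg j && (code j == c)) (iota 1 (size pi).-1) -> False.
Proof.
move=> hK.
set J := filter (fun j => chg j && (code j == c)) (iota 1 (size pi).-1).
have sJ : K <= size J by rewrite size_filter.
have memJ j : j \in J -> [/\ 0 < j, j < size pi, chg j & code j = c].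
  rewrite mem_filter mem_iota => /andP[/andP[h1 /eqP h2] /andP[h3 h4]].
  split => //; move: h3 h4; clear; case: (size pi) => //= n; lia.
have [j0 j0J] : exists j0, j0 \in J.
  exists (nth 0 J 0); apply: mem_nth; exact: leq_trans K_pos sJ.
have [j0p j0n j0c j0code] := memJ j0 j0J.
set x := lab j0.-1; set y := lab j0.
have hxy : x != y by [].
have labJ j : j \in J -> lab j.-1 = x /\ lab j = y.
  move=> hj; have [jp jn _ jc] := memJ j hj.
  apply: code_inj; [exact: lab_ltK jn | exact: lab_ltK j0n |].
  by rewrite -[LHS]/(code j) jc -j0code.
have gap j j' : j \in J -> j' \in J -> j' != j.+1.
  move=> hj hj'; apply/eqP => e; have [h1 _] := labJ j' hj'; have [_ h2] := labJ j hj.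
  by move: h1; rewrite e /= h2 => exy; rewrite exy eqxx in hxy.
have sortedJ : sorted ltn J by apply: sorted_filter; [exact: ltn_trans|exact: iota_ltn_sorted].
set V := pairs J.
have sV : sorted ltn V.
  apply: sorted_pairs => //; apply/allP => j hj; by have [] := memJ j hj.
have allV : all (fun v => v < size pi) V.
  apply: all_pairs => j hj; have [h1 h2 _ _] := memJ j hj; split => //.
  exact: leq_ltn_trans (leq_pred _) h2.
have labV i : i < size V -> lab (nth 0 V i) = if odd i then y else x.
  move=> hi; rewrite size_pairs in hi; rewrite nth_pairs //.
  have hJ : nth 0 J i./2 \in J by apply: mem_nth; rewrite ltn_half_double.
  have [h1 h2] := labJ _ hJ; by case: (odd i).
set V' := if y < x then V else behead V.
have sV' : sorted ltn V'.
  rewrite /V'; case: ifP => // _; move: sV; exact: sorted_behead_ltn.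
have allV' : all (fun v => v < size pi) V'.
  rewrite /V'; case: ifP => // _; move: allV; exact: all_behead.
have sizeV' : K <= size V'.
  have : (size V) = (size J).*2 by rewrite size_pairs.
  rewrite /V'; case: ifP => _ e; first by rewrite e -addnn; apply: leq_trans sJ (leq_addr _ _).
  rewrite size_behead e; move: sJ K_pos; clear; lia.
have labV' i : i < size V' -> lab (nth 0 V' i) = if odd i then minn x y else maxn x y.
  rewrite /V'; case: ifP => hyx hi.
  - rewrite labV //; case: (odd i).
    + by rewrite (minn_idPr (ltnW hyx)).
    + by rewrite (maxn_idPl (ltnW hyx)).
  - have hxy' : x < y by move: hyx hxy; case: ltngtP.
    rewrite nth_behead labV; last by move: hi; rewrite size_behead; case: (size V).
    rewrite /=; case: (odd i) => /=.
    + by rewrite (minn_idPl (ltnW hxy')).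
    + by rewrite (maxn_idPr (ltnW hxy')).
have uV' : uniq V' := sorted_uniq ltn_trans ltnn sV'.
have fV' : filter (fun v => v \in V') (iota 0 (size pi)) = V'.
  apply: (irr_sorted_eq ltn_trans ltnn) => //.
  - apply: sorted_filter; [exact: ltn_trans|exact: iota_ltn_sorted].
  - move=> v; rewrite mem_filter mem_iota /=; case hv: (v \in V') => //=.
    exact: allP allV' v hv.
set M := map (fun v => index v pi) V'.
have uM : uniq M.
  rewrite map_inj_in_uniq // => v v' hv hv' e.
  have h1 : v \in pi by rewrite mem_pi (allP allV' v hv).
  have h2 : v' \in pi by rewrite mem_pi (allP allV' v' hv').
  by rewrite -(nth_index 0 h1) e nth_index.
set sigma := std M.
have ssig : size sigma = size V' by rewrite /sigma /std !size_map.
have psig : is_perm sigma := std_perm_of_uniq uM.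
have asig : alternating sigma.
  move=> i j hi hj hei hoj; rewrite ssig in hi hj.
  have hi' : i < size M by rewrite size_map.
  have hj' : j < size M by rewrite size_map.
  rewrite !std_nth // rank_lt ?mem_nth //.
  rewrite !(nth_map 0) //.
  apply: col_ltP; rewrite -/(lab (nth 0 V' j)) -/(lab (nth 0 V' i)) !labV' // hoj (negbTE hei).
  exact: minn_lt_maxn.
have csig : contains sigma (perm_inv pi).
  exists (map (fun v => v \in V') (iota 0 (size pi))).
  by rewrite /restrict /perm_inv -map_mask -filter_mask fV'.
have := al psig asig (or_intror csig); rewrite ssig ltnNge sizeV'; by [].
Qed.

Lemma ch_bound : count chg (iota 1 (size pi).-1) <= K * K * (K - 1).
Proof.
case: (classic (exists c, c < K * K /\ K <= count (fun j => chg j && (code j == c)) (iota 1 (size pi).-1))).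
- by move=> [c [_ h]]; case: (alt_contra h).
- move=> h.
  have hp : count (fun j => chg j && (code j < K * K)) (iota 1 (size pi).-1) <= K * K * (K - 1).
    apply: pigeon => c hc; rewrite leqNgt; apply/negP => hc'; apply: h; exists c; split => //.
    move: hc' K_pos; clear; lia.
  apply: leq_trans hp; rewrite leq_eqVlt; apply/orP; left; apply/eqP; apply: eq_in_count => j.
  rewrite mem_iota => /andP[h1 h2].
  have hj : j < size pi by move: h1 h2; clear; case: (size pi) => //= n; lia.
  have l1 := lab_ltK hj; have l2 := lab_ltK (leq_ltn_trans (leq_pred j) hj).
  rewrite /code; have -> : lab j.-1 * K + lab j < K * K by move: l1 l2; clear; nia.
  by rewrite andbT.
Qed.

Lemma band_bound v : v < size pi -> band v <= K * K * K.
Proof.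
move=> hv; apply: leq_trans (band_mono (_ : v <= (size pi).-1)) _.
- by move: hv; clear; case: (size pi) => //= n; lia.
- apply: leq_trans ch_bound _; rewrite leq_mul2l leq_subr orbT //.
Qed.

Lemma zip_self_map (T U : Type) (s : seq T) (F : T -> U) : zip s (map F s) = map (fun x => (x, F x)) s.
Proof. by elim: s => //= x s ->. Qed.

Lemma Ew_word : Ew word = map (fun i => (pp_ i, ent i)) (iota 0 (size pi)).
Proof.
rewrite /Ew /word size_map size_iota /E_idx zip_self_map -map_comp.
set g := fun i => (pp_ i, ent i).
rewrite (_ : map _ (iota 0 (size pi)) = map (map g) [seq filter (fun i => pp_ i == P) (iota 0 (size pi)) | P <- iota 0 (size pi)]); last first.
  rewrite -map_comp; apply/eq_in_map => P _ /=; rewrite -map_comp; apply/eq_in_map => i.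
  by rewrite mem_filter => /andP[/eqP e _]; rewrite /g /= e.
rewrite -map_flatten flatten_filter //.
- rewrite -sorted_map; apply: (homo_sorted (e := leq)); [exact: pp_mono | exact: iota_sorted].
- apply/allP => i; rewrite mem_iota /= add0n => hi; exact: leq_ltn_trans (pp_le i) hi.
Qed.

Lemma Repr_word : Repr pi word.
Proof.
split => //; split; first by rewrite Ew_word size_map size_iota.
rewrite Ew_word.
have -> : zip pi [seq (pp_ i, ent i) | i <- iota 0 (size pi)] =
          [seq (nth 0 pi i, (pp_ i, ent i)) | i <- iota 0 (size pi)].
  by rewrite -{1}(mkseq_nth 0 pi) /mkseq zip_map.
move=> u v /mapP[i hi ->] /mapP[j hj ->].
move: hi hj; rewrite !mem_iota !add0n => /andP[_ hi] /andP[_ hj].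
exact: claimA hi hj.
Qed.

Lemma okw_word : okw (alph k K) word.
Proof.
apply/allP => L /mapP[P _ ->]; apply: in_alph; first exact: ltnW.
- by rewrite size_map; exact: P3.
- move=> x /mapP[i]; rewrite mem_filter mem_iota /= add0n => /andP[_ hi] -> /=.
  split; last exact: qq_lt.
  by rewrite /Mb ltnS; apply: band_bound; exact: nth_lt.
Qed.
End Enc.

Lemma encode k K pi : 2 <= k -> is_perm pi -> al_lt pi K -> s_k k pi < K ->
  exists w, Repr pi w /\ okw (alph k K) w.
Proof.
move=> hk pp al sk.
have [Q [e1 [e2 e3]]] := greedy_spec hk (leqnn (size pi)).
have sQ : size Q < K by rewrite e2.
exists (word k pi Q); split.
- exact: Repr_word.
- exact: okw_word.
Qed.

Unset Implicit Arguments.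

Theorem mainTheorem7 (k K : nat) (hk : 0 < k) :
  wpo (fun pi => is_perm pi /\ al_lt pi K /\ s_lt k pi K).
Proof.
split.
- move=> [f [hXf hf]].
  have dec n : size (f n) + n <= size (f 0).
    elim: n => [|n IH]; first by rewrite addn0.
    have [c ne] := hf n.
    have h1 := contains_size c.
    have h2 : size (f n.+1) != size (f n).
      apply/eqP => e; apply: ne; apply: contains_eq => //.
      exact: (hXf n).1.
    apply: leq_trans IH; rewrite addnS -addSn leq_add2r ltn_neqAle h2 h1 //.
  have := dec (size (f 0)).+1; by rewrite addnS ltnNge leq_addl.
- move=> [f [hX hanti]].
  have hw : forall n, exists w, Repr (f n) w /\ okw (alph k K) w.
    move=> n; have [pp [al sl]] := hX n; move: sl; rewrite /s_lt.
    case: ifP => // hk1 sl; apply: encode => //; by rewrite ltnNge hk1.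
  pose w n := proj1_sig (constructive_indefinite_description _ (hw n)).
  have hwn n : Repr (f n) (w n) /\ okw (alph k K) (w n) := proj2_sig (constructive_indefinite_description _ (hw n)).
  have [i [j [hij hs]]] := higman (fun n => (hwn n).2).
  apply: (hanti i j); first by apply/eqP; rewrite neq_ltn hij.
  exact: embed (hwn i).1 (hwn j).1 hs.
Qed.
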